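(* Let $A$ be a commutative special Frobenius algebra in $\mathcal{C}$ whose underlying object decomposes as a direct sum $A=1\oplus F$ of the tensor unit $1$ and an object $F$, where $F\neq 0$ and $\theta_F=-\mathrm{id}_F$. Then $F\otimes F\cong 1$.
   Context: Standing assumptions: $k$ is a field with $\mathrm{char}(k)\neq 2$. $\mathcal{C}$ is a $k$-linear additive idempotent-complete ribbon category, strict as a monoidal category, with bilinear tensor product and absolutely simple tensor unit ($\mathrm{End}_{\mathcal{C}}(1)=k\,\mathrm{id}_1$), with braiding $c$ and twist $\theta$. A Frobenius algebra in $\mathcal{C}$ is an object $A$ with associative unital multiplication $\mu:A\otimes A\to A$, unit $\eta:1\to A$, coassociative counital comultiplication $\Delta:A\to A\otimes A$, counit $\epsilon:A\to 1$, such that $(\mathrm{id}_A\otimes\mu)\circ(\Delta\otimes\mathrm{id}_A)=\Delta\circ\mu=(\mu\otimes\mathrm{id}_A)\circ(\mathrm{id}_A\otimes\Delta)$. It is commutative if $\mu\circ c_{A,A}=\mu$, and special if $\epsilon\circ\eta\in k^\times\,\mathrm{id}_1$ and $\mu\circ\Delta\in k^\times\,\mathrm{id}_A$. *)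

(* Defs.v *)
From HB Require Import structures.
From mathcomp Require Import all_boot all_algebra.
Set Implicit Arguments. Unset Strict Implicit. Unset Printing Implicit Defensive.
Import GRing.Theory.
Local Open Scope ring_scope.

Record ribbonData (k : fieldType) := RibbonData {
  Obj : Type;
  Mor : Obj -> Obj -> lmodType k;
  idm : forall X, Mor X X;
  comp : forall X Y Z, Mor Y Z -> Mor X Y -> Mor X Z;
  tens : Obj -> Obj -> Obj;
  tensm : forall X X' Y Y', Mor X X' -> Mor Y Y' -> Mor (tens X Y) (tens X' Y');
  tunit : Obj;
  assoc : forall X Y Z, Mor (tens (tens X Y) Z) (tens X (tens Y Z));
  assoc_inv : forall X Y Z, Mor (tens X (tens Y Z)) (tens (tens X Y) Z);
  lunit : forall X, Mor (tens tunit X) X;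
  lunit_inv : forall X, Mor X (tens tunit X);
  runit : forall X, Mor (tens X tunit) X;
  runit_inv : forall X, Mor X (tens X tunit);
  braid : forall X Y, Mor (tens X Y) (tens Y X);
  braid_inv : forall X Y, Mor (tens Y X) (tens X Y);
  dualo : Obj -> Obj;
  ev : forall X, Mor (tens (dualo X) X) tunit;
  coev : forall X, Mor tunit (tens X (dualo X));
  twist : forall X, Mor X X;
  twist_inv : forall X, Mor X X
}.

Arguments idm {k C} X : rename.
Arguments comp {k C X Y Z} : rename.
Arguments tensm {k C X X' Y Y'} : rename.
Arguments assoc {k C} X Y Z : rename.
Arguments assoc_inv {k C} X Y Z : rename.
Arguments lunit {k C} X : rename.
Arguments lunit_inv {k C} X : rename.
Arguments runit {k C} X : rename.
Arguments runit_inv {k C} X : rename.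
Arguments braid {k C} X Y : rename.
Arguments braid_inv {k C} X Y : rename.
Arguments ev {k C} X : rename.
Arguments coev {k C} X : rename.
Arguments twist {k C} X : rename.
Arguments twist_inv {k C} X : rename.
Arguments tens {k C} : rename.
Arguments tunit {k C} : rename.
Arguments dualo {k C} : rename.

Section RibbonDefs.
Variables (k : fieldType) (C : ribbonData k).
Local Notation Ob := (Obj C).
Local Notation I := (@tunit k C).
Local Notation "g \o f" := (comp g f).
Local Notation "f \x g" := (tensm f g) (at level 40, left associativity).

Definition inverses (X Y : Ob) (f : Mor X Y) (g : Mor Y X) :=
  g \o f = idm X /\ f \o g = idm Y.

Definition isomorphic (X Y : Ob) :=
  exists (f : Mor X Y) (g : Mor Y X), inverses f g.

Definition is_biproduct (X Y S : Ob) (i1 : Mor X S) (p1 : Mor S X)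
    (i2 : Mor Y S) (p2 : Mor S Y) :=
  [/\ p1 \o i1 = idm X, p2 \o i2 = idm Y, p1 \o i2 = 0, p2 \o i1 = 0
    & (i1 \o p1) + (i2 \o p2) = idm S].

Definition is_zero_obj (X : Ob) := idm X = 0.

Definition dualm (X Y : Ob) (f : Mor X Y) : Mor (dualo Y) (dualo X) :=
  lunit (dualo X) \o (ev Y \x idm (dualo X)) \o assoc_inv (dualo Y) Y (dualo X)
  \o (idm (dualo Y) \x (f \x idm (dualo X))) \o (idm (dualo Y) \x coev X)
  \o runit_inv (dualo Y).

Record ribbonAxioms : Prop := RibbonAxioms {
  compA : forall (X Y Z W : Ob) (f : Mor X Y) (g : Mor Y Z) (h : Mor Z W),
    h \o (g \o f) = (h \o g) \o f;
  comp1m : forall (X Y : Ob) (f : Mor X Y), idm Y \o f = f;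
  compm1 : forall (X Y : Ob) (f : Mor X Y), f \o idm X = f;
  comp_linl : forall (X Y Z : Ob) (a : k) (g1 g2 : Mor Y Z) (f : Mor X Y),
    (a *: g1 + g2) \o f = a *: (g1 \o f) + (g2 \o f);
  comp_linr : forall (X Y Z : Ob) (a : k) (g : Mor Y Z) (f1 f2 : Mor X Y),
    g \o (a *: f1 + f2) = a *: (g \o f1) + (g \o f2);
  zero_exists : exists Z : Ob, is_zero_obj Z;
  biproduct_exists : forall X Y : Ob, exists (S : Ob) (i1 : Mor X S) (p1 : Mor S X)
    (i2 : Mor Y S) (p2 : Mor S Y), is_biproduct i1 p1 i2 p2;
  idem_split : forall (X : Ob) (e : Mor X X), e \o e = e ->
    exists (Y : Ob) (r : Mor X Y) (s : Mor Y X), r \o s = idm Y /\ s \o r = e;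
  tensm_linl : forall (X X' Y Y' : Ob) (a : k) (f1 f2 : Mor X X') (g : Mor Y Y'),
    (a *: f1 + f2) \x g = a *: (f1 \x g) + (f2 \x g);
  tensm_linr : forall (X X' Y Y' : Ob) (a : k) (f : Mor X X') (g1 g2 : Mor Y Y'),
    f \x (a *: g1 + g2) = a *: (f \x g1) + (f \x g2);
  tensm_id : forall X Y : Ob, idm X \x idm Y = idm (tens X Y);
  tensm_comp : forall (X X' X'' Y Y' Y'' : Ob) (f : Mor X X') (f' : Mor X' X'')
      (g : Mor Y Y') (g' : Mor Y' Y''),
    (f' \o f) \x (g' \o g) = (f' \x g') \o (f \x g);
  assoc_nat : forall (X X' Y Y' Z Z' : Ob) (f : Mor X X') (g : Mor Y Y') (h : Mor Z Z'),
    (f \x (g \x h)) \o assoc X Y Z = assoc X' Y' Z' \o ((f \x g) \x h);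
  assoc_iso : forall X Y Z : Ob, inverses (assoc X Y Z) (assoc_inv X Y Z);
  lunit_nat : forall (X Y : Ob) (f : Mor X Y), f \o lunit X = lunit Y \o (idm I \x f);
  lunit_iso : forall X : Ob, inverses (lunit X) (lunit_inv X);
  runit_nat : forall (X Y : Ob) (f : Mor X Y), f \o runit X = runit Y \o (f \x idm I);
  runit_iso : forall X : Ob, inverses (runit X) (runit_inv X);
  pentagon : forall X Y Z W : Ob,
    assoc X Y (tens Z W) \o assoc (tens X Y) Z W
    = (idm X \x assoc Y Z W) \o assoc X (tens Y Z) W \o (assoc X Y Z \x idm W);
  triangle : forall X Y : Ob,
    (idm X \x lunit Y) \o assoc X I Y = runit X \x idm Y;
  unit_simple : forall f : Mor I I, exists c : k, f = c *: idm I;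
  unit_nonzero : ~ is_zero_obj I;
  braid_nat : forall (X X' Y Y' : Ob) (f : Mor X X') (g : Mor Y Y'),
    (g \x f) \o braid X Y = braid X' Y' \o (f \x g);
  braid_iso : forall X Y : Ob, inverses (braid X Y) (braid_inv X Y);
  hexagon1 : forall X Y Z : Ob,
    assoc Y Z X \o braid X (tens Y Z) \o assoc X Y Z
    = (idm Y \x braid X Z) \o assoc Y X Z \o (braid X Y \x idm Z);
  hexagon2 : forall X Y Z : Ob,
    assoc_inv Z X Y \o braid (tens X Y) Z \o assoc_inv X Y Z
    = (braid X Z \x idm Y) \o assoc_inv X Z Y \o (idm X \x braid Y Z);
  zigzag1 : forall X : Ob,
    runit X \o (idm X \x ev X) \o assoc X (dualo X) X \o (coev X \x idm X)
    \o lunit_inv X = idm X;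
  zigzag2 : forall X : Ob,
    lunit (dualo X) \o (ev X \x idm (dualo X)) \o assoc_inv (dualo X) X (dualo X)
    \o (idm (dualo X) \x coev X) \o runit_inv (dualo X) = idm (dualo X);
  twist_nat : forall (X Y : Ob) (f : Mor X Y), f \o twist X = twist Y \o f;
  twist_iso : forall X : Ob, inverses (twist X) (twist_inv X);
  twist_tens : forall X Y : Ob,
    twist (tens X Y) = (twist X \x twist Y) \o braid Y X \o braid X Y;
  twist_unit : twist I = idm I;
  twist_dual : forall X : Ob, twist (dualo X) = dualm (twist X)
}.

Definition frobenius_algebra (A : Ob) (mu : Mor (tens A A) A) (eta : Mor I A)
    (delta : Mor A (tens A A)) (eps : Mor A I) :=
  [/\ mu \o (mu \x idm A) = mu \o (idm A \x mu) \o assoc A A A,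
      mu \o (eta \x idm A) = lunit A
    & mu \o (idm A \x eta) = runit A] /\
  [/\ assoc A A A \o (delta \x idm A) \o delta = (idm A \x delta) \o delta,
      (eps \x idm A) \o delta = lunit_inv A
    & (idm A \x eps) \o delta = runit_inv A] /\
  ((idm A \x mu) \o assoc A A A \o (delta \x idm A) = delta \o mu /\
   delta \o mu = (mu \x idm A) \o assoc_inv A A A \o (idm A \x delta)).

Definition commutative_alg (A : Ob) (mu : Mor (tens A A) A) :=
  mu \o braid A A = mu.

Definition special_frob (A : Ob) (mu : Mor (tens A A) A) (eta : Mor I A)
    (delta : Mor A (tens A A)) (eps : Mor A I) :=
  (exists c : k, c != 0 /\ eps \o eta = c *: idm I) /\
  (exists d : k, d != 0 /\ mu \o delta = d *: idm A).

End RibbonDefs.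

(* Main.v *)
Require Import Defs.
From HB Require Import structures.
From mathcomp Require Import all_boot all_algebra.
Import GRing.Theory.
Local Open Scope ring_scope.

Ltac sh := match goal with |- ?g => idtac g end.
Section Aux.
Variables (k : fieldType) (C : ribbonData k) (HC : ribbonAxioms C).
Local Notation "g \oo f" := (Defs.comp g f) (at level 38, left associativity).
Local Notation "f \x g" := (tensm f g) (at level 40, left associativity).
Local Notation I := (@tunit k C).
Local Notation Ob := (Obj C).

Lemma cA (X Y Z W : Ob) (f : Mor X Y) (g : Mor Y Z) (h : Mor Z W) :
  h \oo (g \oo f) = h \oo g \oo f.
Proof. exact: (Defs.compA HC). Qed.
Arguments cA {X Y Z W}.
Lemma c1m (X Y : Ob) (f : Mor X Y) : idm Y \oo f = f.
Proof. exact: (comp1m HC). Qed.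
Lemma cm1 (X Y : Ob) (f : Mor X Y) : f \oo idm X = f.
Proof. exact: (compm1 HC). Qed.

Lemma comp0l (X Y Z : Ob) (f : Mor X Y) : (0 : Mor Y Z) \oo f = 0.
Proof.
have := comp_linl HC 1 (0 : Mor Y Z) 0 f; rewrite !scale1r addr0 => H.
by apply: (addrI (0 \oo f)); rewrite addr0 -H.
Qed.
Lemma comp0r (X Y Z : Ob) (g : Mor Y Z) : g \oo (0 : Mor X Y) = 0.
Proof.
have := comp_linr HC 1 g (0 : Mor X Y) 0; rewrite !scale1r addr0 => H.
by apply: (addrI (g \oo 0)); rewrite addr0 -H.
Qed.
Lemma compDl (X Y Z : Ob) (g1 g2 : Mor Y Z) (f : Mor X Y) :
  (g1 + g2) \oo f = g1 \oo f + g2 \oo f.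
Proof. by have := comp_linl HC 1 g1 g2 f; rewrite !scale1r. Qed.
Lemma compDr (X Y Z : Ob) (g : Mor Y Z) (f1 f2 : Mor X Y) :
  g \oo (f1 + f2) = g \oo f1 + g \oo f2.
Proof. by have := comp_linr HC 1 g f1 f2; rewrite !scale1r. Qed.
Lemma compZl (X Y Z : Ob) a (g : Mor Y Z) (f : Mor X Y) :
  (a *: g) \oo f = a *: (g \oo f).
Proof. by have := comp_linl HC a g 0 f; rewrite !addr0 comp0l addr0. Qed.
Lemma compZr (X Y Z : Ob) a (g : Mor Y Z) (f : Mor X Y) :
  g \oo (a *: f) = a *: (g \oo f).
Proof. by have := comp_linr HC a g f 0; rewrite !addr0 comp0r addr0. Qed.
Lemma compNl (X Y Z : Ob) (g : Mor Y Z) (f : Mor X Y) :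
  (- g) \oo f = - (g \oo f).
Proof. by rewrite -scaleN1r compZl scaleN1r. Qed.
Lemma compNr (X Y Z : Ob) (g : Mor Y Z) (f : Mor X Y) :
  g \oo (- f) = - (g \oo f).
Proof. by rewrite -scaleN1r compZr scaleN1r. Qed.
Lemma compBl (X Y Z : Ob) (g1 g2 : Mor Y Z) (f : Mor X Y) :
  (g1 - g2) \oo f = g1 \oo f - g2 \oo f.
Proof. by rewrite compDl compNl. Qed.
Lemma compBr (X Y Z : Ob) (g : Mor Y Z) (f1 f2 : Mor X Y) :
  g \oo (f1 - f2) = g \oo f1 - g \oo f2.
Proof. by rewrite compDr compNr. Qed.

Lemma tens0l (X X' Y Y' : Ob) (g : Mor Y Y') : (0 : Mor X X') \x g = 0.
Proof.
have := tensm_linl HC 1 (0 : Mor X X') 0 g; rewrite !scale1r addr0 => H.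
by apply: (addrI (0 \x g)); rewrite addr0 -H.
Qed.
Lemma tens0r (X X' Y Y' : Ob) (f : Mor X X') : f \x (0 : Mor Y Y') = 0.
Proof.
have := tensm_linr HC 1 f (0 : Mor Y Y') 0; rewrite !scale1r addr0 => H.
by apply: (addrI (f \x 0)); rewrite addr0 -H.
Qed.
Lemma tensDl (X X' Y Y' : Ob) (f1 f2 : Mor X X') (g : Mor Y Y') :
  (f1 + f2) \x g = f1 \x g + f2 \x g.
Proof. by have := tensm_linl HC 1 f1 f2 g; rewrite !scale1r. Qed.
Lemma tensDr (X X' Y Y' : Ob) (f : Mor X X') (g1 g2 : Mor Y Y') :
  f \x (g1 + g2) = f \x g1 + f \x g2.
Proof. by have := tensm_linr HC 1 f g1 g2; rewrite !scale1r. Qed.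
Lemma tensZl (X X' Y Y' : Ob) a (f : Mor X X') (g : Mor Y Y') :
  (a *: f) \x g = a *: (f \x g).
Proof. by have := tensm_linl HC a f 0 g; rewrite !addr0 tens0l addr0. Qed.
Lemma tensZr (X X' Y Y' : Ob) a (f : Mor X X') (g : Mor Y Y') :
  f \x (a *: g) = a *: (f \x g).
Proof. by have := tensm_linr HC a f g 0; rewrite !addr0 tens0r addr0. Qed.
Lemma tensNl (X X' Y Y' : Ob) (f : Mor X X') (g : Mor Y Y') :
  (- f) \x g = - (f \x g).
Proof. by rewrite -scaleN1r tensZl scaleN1r. Qed.
Lemma tensNr (X X' Y Y' : Ob) (f : Mor X X') (g : Mor Y Y') :
  f \x (- g) = - (f \x g).
Proof. by rewrite -scaleN1r tensZr scaleN1r. Qed.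
Lemma tensC (X X' X'' Y Y' Y'' : Ob) (f : Mor X X') (f' : Mor X' X'')
      (g : Mor Y Y') (g' : Mor Y' Y'') :
  (f' \x g') \oo (f \x g) = (f' \oo f) \x (g' \oo g).
Proof. by rewrite (tensm_comp HC). Qed.
Lemma tid (X Y : Ob) : idm X \x idm Y = idm (tens X Y).
Proof. exact: (tensm_id HC). Qed.

Lemma assoc_invK (X Y Z : Ob) : assoc_inv X Y Z \oo assoc X Y Z = idm _.
Proof. by case: (assoc_iso HC X Y Z). Qed.
Lemma assocK (X Y Z : Ob) : assoc X Y Z \oo assoc_inv X Y Z = idm _.
Proof. by case: (assoc_iso HC X Y Z). Qed.

Lemma assoc_inv_nat (X X' Y Y' Z Z' : Ob) (f : Mor X X') (g : Mor Y Y') (h : Mor Z Z') :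
  assoc_inv X' Y' Z' \oo (f \x (g \x h)) = ((f \x g) \x h) \oo assoc_inv X Y Z.
Proof.
rewrite -[LHS]cm1 -assocK cA -[assoc_inv _ _ _ \oo _ \oo _]cA (assoc_nat HC).
by rewrite cA assoc_invK c1m.
Qed.

Lemma lunit_inv_nat (X Y : Ob) (f : Mor X Y) :
  lunit_inv Y \oo f = (idm I \x f) \oo lunit_inv X.
Proof.
have [h1 h2] := lunit_iso HC X; have [h3 h4] := lunit_iso HC Y.
rewrite -[LHS]cm1 -h2 cA -[lunit_inv Y \oo f \oo _]cA (lunit_nat HC).
by rewrite cA h3 c1m.
Qed.
Lemma runit_inv_nat (X Y : Ob) (f : Mor X Y) :
  runit_inv Y \oo f = (f \x idm I) \oo runit_inv X.
Proof.
have [h1 h2] := runit_iso HC X; have [h3 h4] := runit_iso HC Y.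
rewrite -[LHS]cm1 -h2 cA -[runit_inv Y \oo f \oo _]cA (runit_nat HC).
by rewrite cA h3 c1m.
Qed.

Lemma scal_I (f : Mor I I) : exists c : k, f = c *: idm I.
Proof. exact: (unit_simple HC). Qed.


Lemma half_zero {X Y : Ob} (n2 : (2%:R : k) != 0) (x : Mor X Y) : x = - x -> x = 0.
Proof.
move=> H.
have H2 : (2%:R : k) *: x = 0 by rewrite scaler_nat mulr2n {1}H addNr.
by rewrite -[x]scale1r -(mulVf n2) -scalerA H2 scaler0.
Qed.

Lemma scale_inj {X Y : Ob} (a b : k) (v : Mor X Y) : a *: v = b *: v -> v != 0 -> a = b.
Proof.
move=> H nv; apply/eqP; apply: contraNT nv => nab.
have H0 : (a - b) *: v = 0 by rewrite scalerBl H subrr.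
have nab' : a - b != 0 by rewrite subr_eq0.
by rewrite -[v]scale1r -(mulVf nab') -scalerA H0 scaler0.
Qed.

Section Main.
Variables (n2 : (2%:R : k) != 0) (A F : Ob) (mu : Mor (tens A A) A) (eta : Mor I A)
    (delta : Mor A (tens A A)) (eps : Mor A I)
    (i1 : Mor I A) (p1 : Mor A I) (i2 : Mor F A) (p2 : Mor A F).
Hypotheses (Hfrob : frobenius_algebra mu eta delta eps)
    (Hcomm : commutative_alg mu)
    (Hspec : special_frob mu eta delta eps)
    (Hsum : is_biproduct i1 p1 i2 p2)
    (HF0 : ~ is_zero_obj F)
    (HthF : twist F = - idm F).

Lemma idA : idm A = i1 \oo p1 + i2 \oo p2.
Proof. by case: Hsum. Qed.
Lemma p1i1 : p1 \oo i1 = idm I. Proof. by case: Hsum. Qed.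
Lemma p2i2 : p2 \oo i2 = idm F. Proof. by case: Hsum. Qed.

Lemma tA1 : twist A \oo i1 = i1.
Proof. by rewrite -(twist_nat HC) (twist_unit HC) cm1. Qed.
Lemma p2tA : p2 \oo twist A = - p2.
Proof. by rewrite (twist_nat HC) HthF compNl c1m. Qed.
Lemma tAi2 : twist A \oo i2 = - i2.
Proof. by rewrite -(twist_nat HC) HthF compNr cm1. Qed.
Lemma etw : eps \oo twist A = eps.
Proof. by rewrite (twist_nat HC) (twist_unit HC) c1m. Qed.
Lemma twe : twist A \oo eta = eta.
Proof. by rewrite -(twist_nat HC) (twist_unit HC) cm1. Qed.

Lemma p2eta : p2 \oo eta = 0.
Proof.
apply: (half_zero n2).
by rewrite -{1}twe cA p2tA compNl.
Qed.
Lemma epsi2 : eps \oo i2 = 0.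
Proof.
apply: (half_zero n2).
by rewrite -{1}etw -cA tAi2 compNr.
Qed.

Lemma mutw : mu \oo (twist A \x twist A) = twist A \oo mu.
Proof.
rewrite -(twist_nat HC) (twist_tens HC).
have Hc : mu \oo braid A A = mu by exact: Hcomm.
rewrite (braid_nat HC) !cA Hc -cA (braid_nat HC) cA Hc //.
Qed.

Lemma p2mu22 : p2 \oo mu \oo (i2 \x i2) = 0.
Proof.
apply: (half_zero n2).
rewrite -[RHS]compNl -compNl -p2tA -(cA _ (twist A) p2) -mutw cA.
by rewrite -(cA _ (twist A \x twist A) _) tensC tAi2 tensNl tensNr opprK.
Qed.

Lemma etaE : exists c1 : k, eta = c1 *: i1.
Proof.
have [c1 Hc1] := scal_I (p1 \oo eta).
exists c1; rewrite -[eta]c1m idA compDl -!cA Hc1 p2eta comp0r addr0.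
by rewrite compZr cm1.
Qed.
Lemma epsE : exists e1 : k, eps = e1 *: p1.
Proof.
have [e1 He1] := scal_I (eps \oo i1).
exists e1; rewrite -[eps]cm1 idA compDr !cA He1 epsi2 comp0l addr0.
by rewrite compZl c1m.
Qed.

Section Inner.
Variables (c1 e1 : k).
Hypotheses (Hc1 : eta = c1 *: i1) (He1 : eps = e1 *: p1).

Lemma nz_c1e1 : c1 != 0 /\ e1 != 0.
Proof.
case: Hspec => [[c [c0 Hc]] _].
have H : (e1 * c1) *: idm I = c *: idm I.
  by rewrite -Hc He1 Hc1 compZl compZr p1i1 scalerA.
have nI : idm I != 0 by apply/eqP; exact: (unit_nonzero HC).
have := scale_inj _ _ _ H nI => Hec.
by move: c0; rewrite -Hec mulf_eq0 negb_or => /andP[].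
Qed.

Lemma i1E : i1 = c1^-1 *: eta.
Proof. by rewrite Hc1 scalerA mulVf ?scale1r //; case: nz_c1e1. Qed.
Lemma p1E : p1 = e1^-1 *: eps.
Proof. by rewrite He1 scalerA mulVf ?scale1r //; case: nz_c1e1. Qed.

Lemma p2mui2 : p2 \oo mu \oo (i2 \x idm A) = c1^-1 *: (runit F \oo (idm F \x p1)).
Proof.
have e1' : i2 \x (i1 \oo p1) = (i2 \x i1) \oo (idm F \x p1) by rewrite tensC cm1.
have e2' : i2 \x (i2 \oo p2) = (i2 \x i2) \oo (idm F \x p2) by rewrite tensC cm1.
rewrite idA tensDr compDr e1' e2' [X in _ + X]cA p2mu22 comp0l addr0.
have e3 : i2 \x i1 = c1^-1 *: ((idm A \x eta) \oo (i2 \x idm I)).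
  by rewrite tensC c1m cm1 i1E tensZr.
case: Hfrob => [[_ _ mR] _].
rewrite e3 compZl compZr; congr (_ *: _).
rewrite !cA; congr (_ \oo _).
rewrite -(cA (idm A \x eta) mu p2) mR -cA -(runit_nat HC) cA p2i2 c1m //.
Qed.

Lemma p12delta : (p1 \x p2) \oo delta \oo i2 = e1^-1 *: lunit_inv F.
Proof.
case: Hfrob => [_ [[_ dL _] _]].
rewrite p1E tensZl !compZl; congr (_ *: _).
have -> : eps \x p2 = (idm I \x p2) \oo (eps \x idm A) by rewrite tensC c1m cm1.
rewrite -(cA _ (eps \x idm A)) dL -(lunit_inv_nat) -cA p2i2 cm1 //.
Qed.

Lemma mu22 : i1 \oo (p1 \oo (mu \oo (i2 \x i2))) = mu \oo (i2 \x i2).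
Proof.
rewrite -[RHS]c1m idA compDl -!cA.
have -> : i2 \oo (p2 \oo (mu \oo (i2 \x i2))) = 0.
  by rewrite (cA _ mu p2) p2mu22 comp0r.
by rewrite addr0.
Qed.

Lemma tri_inv : (runit F \x idm F) \oo (assoc_inv F I F \oo (idm F \x lunit_inv F)) = idm _.
Proof.
rewrite -(triangle HC) -cA (cA _ (assoc_inv _ _ _)) assocK c1m tensC c1m.
by have [_ ->] := lunit_iso HC F; rewrite tid.
Qed.

Lemma gf : ((p2 \x p2) \oo delta \oo i1) \oo (p1 \oo mu \oo (i2 \x i2))
   = (c1^-1 * e1^-1) *: idm (tens F F).
Proof.
case: Hfrob => [_ [_ [_ fr2]]].
rewrite -!cA mu22 (cA _ mu delta) fr2 -!cA.
have S1 : (idm A \x delta) \oo (i2 \x i2) = (i2 \x (idm A \x idm A)) \oo (idm F \x (delta \oo i2)).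
  by rewrite !tensC tid !c1m !cm1.
rewrite S1 (cA _ _ (assoc_inv _ _ _)) assoc_inv_nat !cA.
rewrite !tensC !cm1 p2mui2 tensZl !compZl.
have -> : (runit F \oo (idm F \x p1)) \x p2 = (runit F \x idm F) \oo ((idm F \x p1) \x p2).
  by rewrite tensC c1m.
rewrite -!cA (cA _ (assoc_inv _ _ _)) -assoc_inv_nat -cA tensC cm1 (cA i2 delta) p12delta.
by rewrite tensZr !compZr tri_inv scalerA.
Qed.

Lemma zigA : runit A \oo ((idm A \x (eps \oo mu)) \oo (assoc A A A \oo
   (((delta \oo eta) \x idm A) \oo lunit_inv A))) = idm A.
Proof.
case: Hfrob => [[_ mL _] [[_ _ dR] [fr1 _]]].
have fr1' : forall W (x : Mor W (tens A A)),
   (idm A \x mu) \oo (assoc A A A \oo ((delta \x idm A) \oo x)) = delta \oo (mu \oo x).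
  by move=> W x; rewrite !cA fr1.
have -> : idm A \x (eps \oo mu) = (idm A \x eps) \oo (idm A \x mu) by rewrite tensC c1m.
have -> : (delta \oo eta) \x idm A = (delta \x idm A) \oo (eta \x idm A) by rewrite tensC c1m.
rewrite -!cA fr1' (cA _ delta) dR (cA _ (eta \x idm A) mu) mL.
rewrite cA.
have [_ ->] := runit_iso HC A.
have [_ ->] := lunit_iso HC A.
by rewrite c1m.
Qed.

Lemma f_nz : p1 \oo mu \oo (i2 \x i2) != 0.
Proof.
apply/eqP => Hf; apply: HF0; rewrite /is_zero_obj.
have H0 : eps \oo mu \oo (idm A \x i2) = 0.
  rewrite idA tensDl compDr.
  have -> : (i1 \oo p1) \x i2 = (i1 \x i2) \oo (p1 \x idm F) by rewrite tensC cm1.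
  have -> : (i2 \oo p2) \x i2 = (i2 \x i2) \oo (p2 \x idm F) by rewrite tensC cm1.
  rewrite !cA.
  have -> : eps \oo mu \oo (i2 \x i2) = 0 by rewrite He1 !compZl Hf scaler0.
  have -> : eps \oo mu \oo (i1 \x i2) = 0.
    case: Hfrob => [[_ mL _] _].
    have -> : i1 \x i2 = c1^-1 *: ((eta \x idm A) \oo (idm I \x i2)).
      by rewrite tensC c1m cm1 i1E tensZl.
    by rewrite compZr -cA (cA _ _ mu) mL -(lunit_nat HC) cA epsi2 comp0l scaler0.
  by rewrite !comp0l addr0.
rewrite -p2i2 -[i2]c1m -zigA.
rewrite -!cA lunit_inv_nat (cA _ (idm I \x i2)) tensC (c1m _ _ i2) (cm1 _ _ (delta \oo eta)).
have -> : (delta \oo eta) \x i2 = ((idm A \x idm A) \x i2) \oo ((delta \oo eta) \x idm F).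
  by rewrite tensC tid c1m cm1.
rewrite -cA (cA _ _ (assoc A A A)) -(assoc_nat HC).
rewrite -cA (cA _ _ (idm A \x (eps \oo mu))) tensC (c1m _ _ (idm A)) H0 tens0r.
by rewrite !comp0l !comp0r.
Qed.

End Inner.

Lemma main_aux : isomorphic (tens F F) I.
Proof.
have [c1 Hc1] := etaE.
have [e1 He1] := epsE.
have [nc ne] : c1 != 0 /\ e1 != 0 by eapply nz_c1e1; eassumption.
pose f := p1 \oo mu \oo (i2 \x i2).
pose g := (c1 * e1) *: ((p2 \x p2) \oo delta \oo i1).
have Hgf : g \oo f = idm _.
  have H : ((p2 \x p2) \oo delta \oo i1) \oo f = (c1^-1 * e1^-1) *: idm (tens F F).
    by eapply gf; eassumption.
  rewrite /g compZl H scalerA mulrACA mulfV // mulfV // mulr1 scale1r //.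
have fnz : f != 0 by eapply f_nz; eassumption.
have [t Ht] := scal_I (f \oo g).
have Htf : t *: f = 1 *: f.
  by rewrite scale1r -[f in RHS]cm1 -Hgf cA Ht compZl c1m.
have t1 := scale_inj _ _ _ Htf fnz.
exists f, g; split => //.
by rewrite Ht t1 scale1r.
Qed.

End Main.
End Aux.

Theorem mainTheorem2 (k : fieldType) (char_ne2 : (2%:R : k) != 0)
    (C : ribbonData k) (HC : ribbonAxioms C)
    (A F : Obj C) (mu : Mor (tens A A) A) (eta : Mor tunit A)
    (delta : Mor A (tens A A)) (eps : Mor A tunit)
    (Hfrob : frobenius_algebra mu eta delta eps)
    (Hcomm : commutative_alg mu)
    (Hspec : special_frob mu eta delta eps)
    (i1 : Mor tunit A) (p1 : Mor A tunit) (i2 : Mor F A) (p2 : Mor A F)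
    (Hsum : is_biproduct i1 p1 i2 p2)
    (HF0 : ~ is_zero_obj F)
    (HthF : twist F = - idm F) :
  isomorphic (tens F F) tunit.
Proof.
by eapply main_aux; eassumption.
Qed.
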